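(* Let $q=3^m$ with $m$ a positive integer. Let $b\in\mathbb{F}_q^*$ and $\delta\in\mathbb{F}_{q^2}$. Put $$A=-b,\quad B=b\delta^{q+1}(\delta^q+\delta),\quad C=(\delta^q-\delta)^2-b^{-1},$$ and suppose that $P(x)=b(x^q+x+\delta)^{q+2}-x$ permutes $\mathbb{F}_{q^2}$. (1) If $C=0$, then the compositional inverse of $P(x)$ over $\mathbb{F}_{q^2}$ is $$P^{-1}(x)=b\left(A^{-q/3}\left((x^q+x)-B\right)^{q/3}+\delta\right)^{q+2}-x.$$ (2) If $C$ is not a square in $\mathbb{F}_q$, then the compositional inverse of $P(x)$ over $\mathbb{F}_{q^2}$ is $$P^{-1}(x)=b\left(\delta+\frac{N_{3^m/3}(C)}{1-N_{3^m/3}(C)}\sum_{i=0}^{m-1}A^{-3^i}C^{-\frac{3^{i+1}-1}{2}}\left(x^q+x-B\right)^{3^i}\right)^{q+2}-x.$$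
   Context: For $a\in\mathbb{F}_{3^m}$, $N_{3^m/3}(a)=a^{(3^m-1)/2}$ is the norm to $\mathbb{F}_3$. The compositional inverse of a permutation polynomial $f$ of $\mathbb{F}_{Q}$ is the unique polynomial $f^{-1}$ (modulo $x^Q-x$) with $f(f^{-1}(c))=f^{-1}(f(c))=c$ for all $c\in\mathbb{F}_Q$. *)

(* Defs.v *)
From HB Require Import structures.
From mathcomp Require Import all_boot all_order all_algebra all_field.
Set Implicit Arguments. Unset Strict Implicit. Unset Printing Implicit Defensive.
Import GRing.Theory.
Local Open Scope ring_scope.

(* F is a finite field with q^2 elements, q = 3^m.  F_q = {x | x^q = x}. *)

(* Norm from F_{3^m} to F_3: a^((3^m-1)/2) *)
Definition norm3 (F : finFieldType) (m : nat) (a : F) : F :=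
  a ^+ ((3 ^ m).-1 %/ 2).

Definition is_square_Fq (F : finFieldType) (m : nat) (a : F) : Prop :=
  exists y : F, y ^+ (3 ^ m) = y /\ y ^+ 2 = a.

Definition Ppoly (F : finFieldType) (m : nat) (b delta : F) (x : F) : F :=
  b * (x ^+ (3 ^ m) + x + delta) ^+ (3 ^ m + 2) - x.

Definition PcA (F : finFieldType) (b : F) : F := - b.
Definition PcB (F : finFieldType) (m : nat) (b delta : F) : F :=
  b * delta ^+ (3 ^ m + 1) * (delta ^+ (3 ^ m) + delta).
Definition PcC (F : finFieldType) (m : nat) (b delta : F) : F :=
  (delta ^+ (3 ^ m) - delta) ^+ 2 - b^-1.

(* case (1): C = 0;  A^{-q/3} ((x^q+x) - B)^{q/3}, q/3 = 3^(m-1) *)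
Definition Pinv1 (F : finFieldType) (m : nat) (b delta : F) (x : F) : F :=
  b * ((PcA b) ^- (3 ^ m.-1) * ((x ^+ (3 ^ m) + x) - PcB m b delta) ^+ (3 ^ m.-1)
        + delta) ^+ (3 ^ m + 2) - x.

Definition Pinv2 (F : finFieldType) (m : nat) (b delta : F) (x : F) : F :=
  let A := PcA b in
  let B := PcB m b delta in
  let C := PcC m b delta in
  let N := norm3 m C in
  b * (delta + N / (1 - N) *
        \sum_(i < m) (A ^- (3 ^ i) * C ^- ((3 ^ i.+1).-1 %/ 2)
                       * (x ^+ (3 ^ m) + x - B) ^+ (3 ^ i)))
    ^+ (3 ^ m + 2) - x.

(* Main.v *)
Require Import Defs.
From mathcomp Require Import all_boot all_order all_algebra all_field all_solvable.
From mathcomp Require Import ring zify.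
Import GRing.Theory.
Local Open Scope ring_scope.
Lemma eS i : ((3^i.+1).-1 %/ 2 = (3^i).-1 %/ 2 + 3^i)%N.
Proof. rewrite expnS. have := expn_gt0 3 i. lia. Qed.

Lemma oddq m : (3^m = (2 * ((3^m).-1 %/ 2)).+1)%N.
Proof. have : odd (3^m) by rewrite oddX orbT.
have := odd_double_half (3^m). move=> H ox. rewrite ox -divn2 in H. lia. Qed.

Lemma key (R : fieldType) (h3 : 3%:R = 0 :> R) (b cq c d dq : R) : b != 0 ->
  b * ((cq + c + d) * (cq + c + dq) ^+ 2) - cq + (b * ((cq + c + dq) * (cq + c + d) ^+ 2) - c)
   - b * (dq * d) * (dq + d) = - b * ((cq + c) ^+ 3 - ((dq - d) ^+ 2 - b^-1) * (cq + c)).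
Proof.
move=> b0; set bi := b^-1; have E : b * bi = 1 by rewrite mulfV.
apply/eqP; rewrite -subr_eq0; set u := cq + c.
have -> : b * ((u + d) * (u + dq) ^+ 2) - cq + (b * ((u + dq) * (u + d) ^+ 2) - c)
   - b * (dq * d) * (dq + d) - - b * (u ^+ 3 - ((dq - d) ^+ 2 - bi) * u)
   = 3%:R * (b*(u^+3 + (d+dq)*u^+2 + 2%:R*(d*dq)*u)) + (b*bi - 1)*u.
  rewrite /u; ring.
by rewrite h3 E subrr !mul0r addr0.
Qed.
Lemma euler (F : finFieldType) (q h : nat) : #|F| = (q ^ 2)%N -> q = (2 * h).+1 -> (0 < h)%N ->
  forall C : F, C != 0 -> C ^+ q = C -> C ^+ h = 1 -> exists y : F, y ^+ q = y /\ y ^+ 2 = C.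
Proof.
move=> cF qh h0 C C0 Cq Ch.
pose n := #|F|.-1.
have n0 : (0 < n)%N by rewrite /n cF qh; lia.
have un : forall x : F, x != 0 -> x ^+ n = 1.
  move=> x x0; apply: (mulIf x0); rewrite mul1r -exprSr /n prednK ?expf_card //.
  by rewrite cF qh; lia.
pose rs := enum [set~ (0 : F)].
have /hasP [g _ pg] : has n.-primitive_root rs.
  apply: has_prim_root => //.
  - apply/allP => x; rewrite mem_enum in_setC1 => x0.
    by rewrite unity_rootE un.
  - exact: enum_uniq.
  - by rewrite -cardE cardsC1.
have [[i _] /= Ci] := prim_rootP pg (un C C0).
have : (n %| i * h)%N by rewrite (prim_order_dvd pg) exprM -Ci Ch.
have nE : n = (2 * h * (q + 1))%N by rewrite /n cF qh; nia.
rewrite nE (mulnC 2 h) -mulnA (mulnC i) dvdn_pmul2l //.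
case/dvdnP => j ij.
exists (g ^+ ((q + 1) * j)).
have gn : g ^+ n = 1 by apply/eqP; rewrite -(prim_order_dvd pg).
split.
  rewrite -exprM; have -> : ((q + 1) * j * q = n * j + (q + 1) * j)%N by rewrite nE qh; nia.
  by rewrite exprD exprM gn expr1n mul1r.
by rewrite Ci -exprM ij; congr (_ ^+ _); lia.
Qed.

Lemma frobP (F : finFieldType) (H3 : 3%N \in [pchar F]) (i : nat) : [pchar F].-nat (3 ^ i)%N.
Proof. by rewrite pnatX (pnatE _ (isT : prime 3)) H3. Qed.

Theorem theorem3p17 (F : finFieldType) (m : nat) (b delta : F) :
  (0 < m)%N ->
  #|F| = ((3 ^ m) ^ 2)%N ->
  b != 0 -> b ^+ (3 ^ m) = b ->
  bijective (Ppoly m b delta) ->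
  (PcC m b delta = 0 ->
     (forall c : F, Pinv1 m b delta (Ppoly m b delta c) = c) /\
     (forall c : F, Ppoly m b delta (Pinv1 m b delta c) = c)) /\
  (~ is_square_Fq m (PcC m b delta) ->
     (forall c : F, Pinv2 m b delta (Ppoly m b delta c) = c) /\
     (forall c : F, Ppoly m b delta (Pinv2 m b delta c) = c)).
Proof.
move=> m0 cF b0 bq [Q PQ QP].
have H3 : 3%N \in [pchar F].
  apply: (card_finPcharP (n := (m * 2)%N)) => //; by rewrite cF expnM.
have h3 : 3%:R = 0 :> F by apply: pcharf0.
have fD i (x y : F) : (x + y) ^+ (3 ^ i) = x ^+ (3 ^ i) + y ^+ (3 ^ i).
  by rewrite exprDn_pchar // frobP.
have fN i (x : F) : (- x) ^+ (3 ^ i) = - x ^+ (3 ^ i).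
  by rewrite exprNn_pchar // frobP.
have fB i (x y : F) : (x - y) ^+ (3 ^ i) = x ^+ (3 ^ i) - y ^+ (3 ^ i).
  by rewrite fD fN.
have xqq (x : F) : x ^+ (3 ^ m) ^+ (3 ^ m) = x.
  by rewrite -exprM mulnn -cF expf_card.
set d := delta.
set A := PcA b; set B := PcB m b d; set C := PcC m b d.
have claim (c : F) : let u := c ^+ (3 ^ m) + c in
    Ppoly m b d c ^+ (3 ^ m) + Ppoly m b d c - B = A * (u ^+ 3 - C * u).
  move=> u; rewrite /Ppoly /B /A /C /PcB /PcA /PcC.
  rewrite fB exprMn bq.
  have tq : (c ^+ (3 ^ m) + c + d) ^+ (3 ^ m) = c ^+ (3 ^ m) + c + d ^+ (3 ^ m).
    by rewrite !fD xqq (addrC c).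
  have e1 : (c ^+ (3 ^ m) + c + d) ^+ (3 ^ m + 2) ^+ (3 ^ m)
      = (c ^+ (3 ^ m) + c + d) * (c ^+ (3 ^ m) + c + d ^+ (3 ^ m)) ^+ 2.
    rewrite -exprM mulnC exprM tq exprD; congr (_ * _).
    by rewrite !fD !xqq (addrC c).
  have e2 : (c ^+ (3 ^ m) + c + d) ^+ (3 ^ m + 2)
      = (c ^+ (3 ^ m) + c + d ^+ (3 ^ m)) * (c ^+ (3 ^ m) + c + d) ^+ 2.
    by rewrite exprD tq.
  rewrite e1 e2 addn1 (exprSr d) /u; apply: key => //.

have uq (c : F) : (c ^+ (3 ^ m) + c) ^+ (3 ^ m) = c ^+ (3 ^ m) + c.
  by rewrite fD xqq addrC.
have A0 : A != 0 by rewrite oppr_eq0.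
have inv (G : F -> F) : (forall c, G (Ppoly m b d c) = c) ->
    (forall c, G (Ppoly m b d c) = c) /\ (forall c, Ppoly m b d (G c) = c).
  move=> H; split => // c; have := H (Q c); rewrite QP => ->; by rewrite QP.
have fin (E c : F) : E = c ^+ (3 ^ m) + c ->
    b * (E + d) ^+ (3 ^ m + 2) - Ppoly m b d c = c.
  by move=> ->; rewrite /Ppoly opprB addrC subrK.
split.
  move=> C0; apply: inv => c; rewrite /Pinv1 -/A -/B.
  apply: fin; rewrite claim /= C0 mul0r subr0.
  have k3 : (3 ^ m = 3 * 3 ^ m.-1)%N by rewrite -expnS prednK.
  by rewrite exprMn mulKf ?expf_neq0 // -exprM -k3 uq.
move=> nsq.
have C0 : C != 0.
  apply/eqP => C0; apply: nsq; exists 0; rewrite C0.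
  by split; rewrite expr0n ?expn_eq0.
have Cq : C ^+ (3 ^ m) = C.
  rewrite /C /PcC fB exprAC fB xqq exprVn bq -(opprB (d ^+ (3 ^ m))) sqrrN.
  done.
set N := norm3 m C.
have N0 : N != 0 by rewrite expf_neq0.
have N1 : 1 - N != 0.
  rewrite subr_eq0; apply/eqP => N1; apply: nsq.
  have q1 : (1 < 3 ^ m)%N by rewrite -{1}(expn0 3) ltn_exp2l.
  rewrite /is_square_Fq; apply: (@euler F _ _ cF (oddq m)) => //.
  by have := oddq m; lia.
apply: inv => c; rewrite /Pinv2 /= -/A -/B -/C -/N (addrC d); apply: fin.
rewrite claim /=.
set u := c ^+ (3 ^ m) + c.
pose f i := C ^- ((3 ^ i).-1 %/ 2) * u ^+ (3 ^ i).
rewrite (eq_bigr (fun i : 'I_m => f i.+1 - f i)); last first.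
  move=> i _; rewrite /f eS.
  have -> : (A * (u ^+ 3 - C * u)) ^+ (3 ^ i) =
      A ^+ (3 ^ i) * (u ^+ (3 ^ i.+1) - C ^+ (3 ^ i) * u ^+ (3 ^ i)).
    by rewrite [LHS]exprMn fB [(C * u) ^+ _]exprMn -exprM -expnS.
  rewrite (exprD C).
  have X0 : C ^+ ((3 ^ i).-1 %/ 2) != 0 by rewrite expf_neq0.
  have Y0 : C ^+ (3 ^ i) != 0 by rewrite expf_neq0.
  have Z0 : A ^+ (3 ^ i) != 0 by rewrite expf_neq0.
  field.
  by rewrite X0 Y0 Z0.
rewrite -(big_mkord (fun _ => true) (fun i => f i.+1 - f i)) telescope_sumr // /f.
rewrite expn0 /= expr0 invr1 mul1r expr1 uq.
have -> : C ^+ ((3 ^ m).-1 %/ 2) = N by [].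
rewrite -/u; field.
by rewrite N0 N1.
Qed.
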